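(* Let $T$ be a finite tree with positive weights $x_v$ (vertices) and $w_e$ (edges), let $c_0,c_l$ be vertices at distance $l\geq1$ with simple path $c_0,c_1,\dots,c_l$, and root $T$ at $c_0$. Then $$Z_{T_{c_1}-T_{c_l}}\,Z_T\;\geq\;Z_{T_{c_1}}\,Z_{T-T_{c_l}}\ \text{ if $l$ is odd},\qquad Z_{T_{c_1}-T_{c_l}}\,Z_T\;\leq\;Z_{T_{c_1}}\,Z_{T-T_{c_l}}\ \text{ if $l$ is even}.$$ (For $l=0$ the paper's statement, with left-hand side multiplied by $\mathbb 1_{l\geq1}$, reduces to the trivial inequality $0\le$ right-hand side.)
   Context: General monomer-dimer model on a finite graph $G=(V,E)$: $Z_G=\sum_{D}\prod_{e\in D}w_e\prod_{v\in\mathscr M_G(D)}x_v$, the sum over all matchings $D\subseteq E$, where $\mathscr M_G(D)$ is the set of vertices not covered by $D$; the partition function of the empty graph is $1$. In the tree $T$ rooted at $c_0$, $T_v$ denotes the subtree induced by $v$ and all its descendants; for subtrees $A\supseteq B$, $A-B$ denotes the subgraph induced by the vertices of $A$ not in $B$. *)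

(* Defs.v *)
From mathcomp Require Import all_boot all_order all_algebra.
Set Implicit Arguments. Unset Strict Implicit. Unset Printing Implicit Defensive.
Import Order.TTheory GRing.Theory Num.Theory.
Local Open Scope ring_scope.

Definition simple_graph (V : finType) (e : rel V) : Prop :=
  symmetric e /\ irreflexive e.

Definition is_tree (V : finType) (e : rel V) : Prop :=
  [/\ simple_graph e,
      (forall x y : V, connect e x y) &
      (forall (x : V) (p : seq V), path e x p -> uniq (x :: p) ->
          (2 <= size p)%N -> ~~ e (last x p) x)].

Definition is_edge (V : finType) (e : rel V) (f : {set V}) : bool :=
  [exists a, exists b, e a b && (f == [set a; b])].

Definition matching_in (V : finType) (e : rel V) (S : {set V})
    (D : {set {set V}}) : bool :=
  [forall f in D, is_edge e f && (f \subset S)] &&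
  [forall f in D, forall g in D, (f != g) ==> [disjoint f & g]].

Definition covered (V : finType) (D : {set {set V}}) : {set V} :=
  \bigcup_(f in D) f.

(* Monomer-dimer partition function of the subgraph induced by S,
   with vertex weights x and edge weights w. Z of the empty graph is 1. *)
Definition Zmd (R : comRingType) (V : finType) (e : rel V)
    (x : V -> R) (w : {set V} -> R) (S : {set V}) : R :=
  \sum_(D : {set {set V}} | matching_in e S D)
     ((\prod_(f in D) w f) * \prod_(v in S :\: covered D) x v).

(* u is in T_v (tree rooted at r): v lies on the simple path from r to u.
   Simple paths have at most #|V| - 1 steps, hence the bounded quantifier. *)
Definition subtree (V : finType) (e : rel V) (r v : V) : {set V} :=
  [set u | [exists n : 'I_#|V|, exists t : n.-tuple V,
     [&& path e r t, uniq (r :: t), last r t == u & v \in r :: t]]].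

(* Main.v *)
Require Import Defs.
From mathcomp Require Import all_boot all_order all_algebra.
From mathcomp Require Import ring.
Import Order.TTheory GRing.Theory Num.Theory.
Module TreeFacts.
Set Implicit Arguments. Unset Strict Implicit. Unset Printing Implicit Defensive.

Section Tree.
Variables (V : finType) (e : rel V).
Hypothesis tree : is_tree e.

Let esym : symmetric e. Proof. by case: tree => -[]. Qed.
Let eirr : irreflexive e. Proof. by case: tree => -[]. Qed.
Let acyc : forall (x : V) (p : seq V), path e x p -> uniq (x :: p) ->
          (2 <= size p)%N -> ~~ e (last x p) x.
Proof. by case: tree. Qed.

Lemma subtreeP r v u : reflect
  (exists t, [/\ path e r t, uniq (r :: t), last r t = u & v \in r :: t])
  (u \in subtree e r v).
Proof.
rewrite inE; apply: (iffP existsP) => [[n /existsP [t /and4P [pt ut /eqP lt vt]]]|[t [pt ut lt vt]]].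
  by exists t.
have st : (size t < #|V|)%N.
  by have := max_card (mem (r :: t)); rewrite (card_uniqP ut).
exists (Ordinal st); apply/existsP; exists (in_tuple t); by rewrite pt ut lt eqxx vt.
Qed.

Lemma seg0 v p2 u : path e v (rcons p2 u) -> uniq (v :: rcons p2 u) -> e u v -> p2 = [::].
Proof.
case: p2 => [//|y p2] pv uv euv.
by move: (acyc pv uv); rewrite size_rcons last_rcons euv => /(_ isT).
Qed.

Lemma seg r t u v : path e r (rcons t u) -> uniq (r :: rcons t u) ->
  v \in r :: t -> e u v -> v = last r t.
Proof.
move=> pt ut; rewrite inE => /orP [/eqP ->|vt] euv.
  by rewrite (seg0 pt ut euv).
move: pt ut; case/splitPr: vt => p1 p2.
rewrite rcons_cat /= cat_path /= => /andP [_ /andP [_ pv]].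
move=> /andP [_]; rewrite cat_uniq => /and3P [_ _ uv].
by rewrite last_cat /= (seg0 pv uv euv).
Qed.

Lemma walk_sub r t : path e r t -> forall s, path e r s -> uniq (r :: s) ->
  last r s = last r t -> {subset r :: s <= r :: t}.
Proof.
elim/last_ind: t => [|t y IH] pt s ps us.
  case: s ps us => [|z s]; first by move=> _ _ _ v.
  move=> _ /= /andP [rn _] ls.
  by move: (mem_last z s); rewrite ls (negbTE rn).
move: pt; rewrite rcons_path => /andP [pt ezy]; rewrite last_rcons.
case/lastP: s ps us => [|s' y'] ps us.
  by move=> /= <- v; rewrite inE => /eqP ->; rewrite mem_head.
rewrite last_rcons => y'y; subst y'.
set z := last r t in ezy IH.
have sub1 : {subset r :: t <= r :: rcons t y}.
  by move=> v; rewrite !inE mem_rcons inE => /orP [->|->]; rewrite ?orbT.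
case zs: (z \in r :: rcons s' y).
  have zy : z != y by apply/negP => /eqP zy; rewrite zy eirr in ezy.
  have zs' : z \in r :: s'.
    by move: zs; rewrite -[r :: rcons s' y]/(rcons (r :: s') y) mem_rcons inE (negbTE zy).
  have eyz : e y z by rewrite esym.
  have lz := seg ps us zs' eyz.
  move: (ps) (us); rewrite rcons_path => /andP [ps' _].
  rewrite -[r :: rcons s' y]/(rcons (r :: s') y) rcons_uniq => /andP [_ us'].
  have sub2 := IH pt s' ps' us' (sym_equal lz).
  move=> v; (try rewrite -[r :: rcons s' y]/(rcons (r :: s') y)); rewrite mem_rcons inE => /orP [/eqP ->|vs].
    by rewrite -[r :: rcons t y]/(rcons (r :: t) y) mem_rcons mem_head.
  by apply: sub1; apply: sub2.
have ps2 : path e r (rcons (rcons s' y) z) by rewrite rcons_path ps last_rcons esym.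
have us2 : uniq (r :: rcons (rcons s' y) z).
  by rewrite -[r :: rcons (rcons s' y) z]/(rcons (r :: rcons s' y) z) rcons_uniq zs us.
have lz2 : last r (rcons (rcons s' y) z) = z by rewrite last_rcons.
have sub2 := IH pt _ ps2 us2 lz2.
move=> v vs; apply: sub1; apply: sub2.
by rewrite -[r :: rcons (rcons s' y) z]/(rcons (r :: rcons s' y) z) mem_rcons inE vs orbT.
Qed.

Variables (c0 : V) (p : seq V).
Hypothesis pp : path e c0 p.
Hypothesis up : uniq (c0 :: p).

Let c k := nth c0 (c0 :: p) k.
Let l := size p.

Lemma lastc k : (k <= l)%N -> last c0 (take k p) = c k.
Proof.
case: k => [|k] kl; first by rewrite take0. by rewrite (take_nth c0 kl) last_rcons.
Qed.

Lemma ptake k : path e c0 (take k p).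
Proof. by move: pp; rewrite -{1}(cat_take_drop k p) cat_path => /andP []. Qed.

Lemma utake k : uniq (c0 :: take k p).
Proof.
move: up => /= /andP [c0p upp]; rewrite take_uniq // andbT.
by apply/negP => /mem_take; apply/negP.
Qed.

Lemma cin k : (k <= l)%N -> c k \in c0 :: take k p.
Proof. by move=> kl; rewrite -lastc // mem_last. Qed.

Lemma cnot k : (k < l)%N -> c k.+1 \notin c0 :: take k p.
Proof.
move=> kl; move: up => /= /andP [c0p upp].
have ckp : nth c0 p k \in p by apply: mem_nth.
rewrite inE negb_or; apply/andP; split.
  by apply/negP => /eqP ck; have ck2 : nth c0 p k = c0 := ck; move: ckp; rewrite ck2 (negbTE c0p).
have ind : nth c0 p k \in drop k p.
  by have := @mem_nth _ c0 (drop k p) 0; rewrite nth_drop addn0 size_drop subn_gt0; apply.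
move: upp; rewrite -{1}(cat_take_drop k p) cat_uniq => /and3P [_ /hasPn H _].
exact: (H _ ind).
Qed.

Lemma Hc' k : (k <= l)%N -> c k \in subtree e c0 (c k).
Proof.
by move=> kl; apply/subtreeP; exists (take k p); split; rewrite ?ptake ?utake ?lastc ?cin.
Qed.

Lemma PK k t : (k <= l)%N -> path e c0 t -> uniq (c0 :: t) -> last c0 t = c k ->
  {subset c0 :: take k p <= c0 :: t}.
Proof.
move=> kl pt ut lt; apply: (walk_sub pt (ptake k) (utake k)).
by rewrite lastc.
Qed.

Lemma PKrev k t : (k <= l)%N -> path e c0 t -> uniq (c0 :: t) -> last c0 t = c k ->
  {subset c0 :: t <= c0 :: take k p}.
Proof.
move=> kl pt ut lt; apply: (walk_sub (ptake k) pt ut).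
by rewrite lastc.
Qed.

Lemma Hcn' k : (k < l)%N -> c k \notin subtree e c0 (c k.+1).
Proof.
move=> kl; apply/negP => /subtreeP [t [pt ut lt ct]].
have := PKrev (ltnW kl) pt ut lt ct.
by rewrite (negbTE (cnot kl)).
Qed.

Lemma Hdec' k : (k < l)%N -> subtree e c0 (c k.+1) \subset subtree e c0 (c k).
Proof.
move=> kl; apply/subsetP => u /subtreeP [t [pt ut lt ct]].
apply/subtreeP; exists t; split => //.
have c1n : c k.+1 != c0.
  by apply/eqP => ce; move: (cnot kl); rewrite ce mem_head.
move: ct; rewrite inE (negbTE c1n) /= => ct.
move: pt ut; case/splitPr: ct => t1 t2 pt ut.
move: (pt); rewrite cat_path /= => /andP [pt1 /andP [el _]].
have pt' : path e c0 (rcons t1 (c k.+1)) by rewrite rcons_path pt1 el.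
have ut' : uniq (c0 :: rcons t1 (c k.+1)).
  have : uniq ((c0 :: rcons t1 (c k.+1)) ++ t2) by rewrite cat_cons -cats1 -catA.
  by rewrite cat_uniq => /andP [].
have ckin : c k \in c0 :: take k.+1 p.
  rewrite (take_nth c0 kl) -[c0 :: rcons _ _]/(rcons (c0 :: _) _) mem_rcons inE.
  by rewrite cin ?orbT // ltnW.
have := PK kl pt' ut' (last_rcons _ _ _) ckin.
rewrite -[c0 :: rcons _ _]/(rcons (c0 :: _) _) mem_rcons !inE mem_cat !inE.
by case/orP => [->|/orP [->|->]]; rewrite ?orbT.
Qed.

Lemma Hcross' k u v : (0 < k <= l)%N -> u \in subtree e c0 (c k) ->
  v \notin subtree e c0 (c k) -> e u v -> u = c k /\ v = c k.-1.
Proof.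
case/andP=> k0 kl /subtreeP [t [pt ut lt ct]] vn euv.
have vt : v \in c0 :: t.
  apply/negPn/negP => vt; move/negP: vn; apply; apply/subtreeP.
  exists (rcons t v); split.
  - by rewrite rcons_path pt lt euv.
  - by rewrite -[c0 :: rcons _ _]/(rcons (c0 :: _) _) rcons_uniq vt ut.
  - by rewrite last_rcons.
  - by rewrite -[c0 :: rcons _ _]/(rcons (c0 :: _) _) mem_rcons inE ct orbT.
case/lastP: t pt ut lt ct vt => [|t' u'] pt ut lt ct vt.
  by move: vt euv; rewrite -lt inE => /eqP ->; rewrite eirr.
rewrite last_rcons in lt; subst u'.
have vu : v != u by apply/negP => /eqP vu; rewrite vu eirr in euv.
have vt' : v \in c0 :: t'.
  by move: vt; rewrite -[c0 :: rcons _ _]/(rcons (c0 :: _) _) mem_rcons inE (negbTE vu).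
have evu : e u v := euv.
have lv := seg pt ut vt' euv.
move: (pt) (ut); rewrite rcons_path => /andP [pt' _].
rewrite -[c0 :: rcons _ _]/(rcons (c0 :: _) _) rcons_uniq => /andP [_ ut'].
have ckt' : c k \notin c0 :: t'.
  apply/negP => ckt'; move/negP: vn; apply; apply/subtreeP; exists t'; split => //.
have uck : u = c k.
  move: ct; rewrite -[c0 :: rcons _ _]/(rcons (c0 :: _) _) mem_rcons inE (negbTE ckt') orbF.
  by move/eqP.
split => //; subst u.
case: k k0 kl vn pt ut ct vt ckt' euv evu vu => [//|k] _ kl vn pt ut ct vt ckt' euv evu vu.
have := PKrev kl pt ut (last_rcons _ _ _) vt.
rewrite (take_nth c0 kl) -[c0 :: rcons _ _]/(rcons (c0 :: _) _) mem_rcons inE.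
rewrite (negbTE vu) /= => vk.
have pk : path e c0 (rcons (take k p) (c k.+1)) by rewrite -(take_nth c0 kl) ptake.
have uk : uniq (c0 :: rcons (take k p) (c k.+1)) by rewrite -(take_nth c0 kl) utake.
by rewrite (seg pk uk vk) // lastc // ltnW.
Qed.

End Tree.

End TreeFacts.
Import TreeFacts.
Local Open Scope ring_scope.
Module ZFacts.
Set Implicit Arguments. Unset Strict Implicit. Unset Printing Implicit Defensive.

Lemma disjP (T : finType) (A B : {set T}) :
  reflect (forall v, v \in A -> v \notin B) [disjoint A & B].
Proof.
rewrite disjoint_subset; apply: (iffP subsetP) => H v /H; by rewrite inE.
Qed.

Lemma prod_setU (R : comNzRingType) (T : finType) (A B : {set T}) (F : T -> R) :
  [disjoint A & B] -> \prod_(i in A :|: B) F i = \prod_(i in A) F i * \prod_(i in B) F i.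
Proof. by move=> d; rewrite -bigU //; apply: eq_bigl => i; rewrite !inE. Qed.

Section Zlemmas.
Variables (R : comNzRingType) (V : finType) (e : rel V) (x : V -> R) (w : {set V} -> R).
Hypothesis esym : symmetric e.

Definition Wt (S : {set V}) (D : {set {set V}}) :=
  (\prod_(f in D) w f) * \prod_(v in S :\: covered D) x v.

Lemma is_edgeP f : reflect (exists a b, e a b /\ f = [set a; b]) (is_edge e f).
Proof.
apply: (iffP existsP) => [[a /existsP [b /andP [eab /eqP ->]]]|[a [b [eab ->]]]].
  by exists a, b.
by exists a; apply/existsP; exists b; rewrite eab eqxx.
Qed.

Lemma matchingP (S : {set V}) (D : {set {set V}}) : reflect
  ((forall f, f \in D -> is_edge e f /\ f \subset S) /\
   (forall f g, f \in D -> g \in D -> f != g -> [disjoint f & g]))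
  (matching_in e S D).
Proof.
apply: (iffP andP) => [[/forall_inP H1 /forall_inP H2]|[H1 H2]]; split.
- by move=> f /H1 /andP.
- by move=> f g /H2 /forall_inP H /H /implyP.
- by apply/forall_inP => f /H1 [-> ->].
- by apply/forall_inP => f fD; apply/forall_inP => g gD; apply/implyP; apply: H2.
Qed.

Lemma edge_n0 f : is_edge e f -> exists a, a \in f.
Proof. by case/is_edgeP => a [b [_ ->]]; exists a; rewrite !inE eqxx. Qed.

Lemma coveredP (D : {set {set V}}) v : reflect (exists2 f, f \in D & v \in f) (v \in covered D).
Proof. exact: bigcupP. Qed.

Lemma covered_sub (S : {set V}) D : matching_in e S D -> covered D \subset S.
Proof.
case/matchingP => H1 _; apply/subsetP => v /coveredP [f /H1 [_ /subsetP]]; apply.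
Qed.

Lemma edge_split (X Y : {set V}) f : (forall u v, u \in X -> v \in Y -> ~~ e u v) ->
  is_edge e f -> f \subset X :|: Y -> (f \subset X) || (f \subset Y).
Proof.
move=> nc /is_edgeP [a [b [eab ->]]]; rewrite !subUset !sub1set !inE.
case/andP => /orP [aX|aY] /orP [bX|bY]; rewrite ?aX ?bX ?aY ?bY ?orbT //.
- by move: (nc _ _ aX bY); rewrite eab.
- by move: (nc _ _ bX aY); rewrite esym eab.
Qed.

Lemma Zsplit_gen (X Y : {set V}) : [disjoint X & Y] ->
  \sum_(D | matching_in e (X :|: Y) D && [forall f in D, (f \subset X) || (f \subset Y)])
     Wt (X :|: Y) D
  = Zmd e x w X * Zmd e x w Y.
Proof.
move=> dXY.
rewrite /Zmd /Wt big_distrlr /= pair_big /=.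
rewrite (reindex_onto (fun p : {set {set V}} * {set {set V}} => p.1 :|: p.2)
   (fun D => ([set f in D | f \subset X], [set f in D | f \subset Y]))) /=; last first.
  move=> D /andP [_ /forall_inP H1]; apply/setP => f; rewrite !inE.
  by case fD: (f \in D) => //=; apply: H1.
have nX2 : forall D2 f, matching_in e Y D2 -> f \in D2 -> f \subset X = false.
  move=> D2 f /matchingP [B1 _] fD2; apply/negP => sX.
  case: (B1 f fD2) => /edge_n0 [a af] /subsetP sY.
  by move: (disjointFr dXY (subsetP sX a af)); rewrite sY.
have nY1 : forall D1 f, matching_in e X D1 -> f \in D1 -> f \subset Y = false.
  move=> D1 f /matchingP [B1 _] fD1; apply/negP => sY.
  case: (B1 f fD1) => /edge_n0 [a af] /subsetP sX.
  by move: (disjointFr dXY (sX a af)); rewrite (subsetP sY a af).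
have dfg : forall f g : {set V}, f \subset X -> g \subset Y -> [disjoint f & g].
  move=> f g sf sg; apply/disjP => v vf; apply/negP => vg.
  by move: (disjointFr dXY (subsetP sf v vf)); rewrite (subsetP sg v vg).
have PE : forall D1 D2, (matching_in e (X :|: Y) (D1 :|: D2) &&
    [forall f in D1 :|: D2, (f \subset X) || (f \subset Y)]) &&
    (([set f in D1 :|: D2 | f \subset X], [set f in D1 :|: D2 | f \subset Y]) == (D1, D2))
    = matching_in e X D1 && matching_in e Y D2.
  move=> D1 D2; apply/idP/idP.
    case/andP => /andP [/matchingP [H1 H2] _] /eqP [E1 E2].
    apply/andP; split; apply/matchingP; split.
    - move=> f fD; have fD' : f \in D1 :|: D2 by rewrite inE fD.
      split; first by case: (H1 f fD').
      by move: fD; rewrite -{1}E1 inE => /andP [].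
    - by move=> f g fD gD; apply: H2; rewrite inE ?fD ?gD.
    - move=> f fD; have fD' : f \in D1 :|: D2 by rewrite inE fD orbT.
      split; first by case: (H1 f fD').
      by move: fD; rewrite -{1}E2 inE => /andP [].
    - by move=> f g fD gD; apply: H2; rewrite inE ?fD ?gD orbT.
  case/andP => M1 M2; have [A1 A2] := matchingP _ _ M1; have [B1 B2] := matchingP _ _ M2.
  apply/andP; split; first apply/andP; first split.
    apply/matchingP; split.
      move=> f; rewrite inE => /orP [fD|fD].
        by case: (A1 f fD) => -> s; rewrite (subset_trans s) // subsetUl.
      by case: (B1 f fD) => -> s; rewrite (subset_trans s) // subsetUr.
    move=> f g; rewrite !inE => /orP[fD|fD] /orP[gD|gD].
    - exact: A2.
    - by move=> _; apply: dfg; [case: (A1 f fD) | case: (B1 g gD)].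
    - by move=> _; rewrite disjoint_sym; apply: dfg; [case: (A1 g gD) | case: (B1 f fD)].
    - exact: B2.
    apply/forall_inP => f; rewrite inE => /orP [fD|fD].
      by case: (A1 f fD) => _ ->.
    by case: (B1 f fD) => _ ->; rewrite orbT.
  apply/eqP; congr pair; apply/setP => f; rewrite !inE.
    case fD1: (f \in D1); first by case: (A1 f fD1) => _ ->.
    by case fD2: (f \in D2) => //=; rewrite (nX2 D2).
  case fD2: (f \in D2); first by case: (B1 f fD2) => _ ->; rewrite orbT.
  by case fD1: (f \in D1) => //=; rewrite (nY1 D1).
apply: eq_big => [[D1 D2]|[D1 D2]] /=; first exact: PE.
rewrite PE; case/andP => M1 M2; have [A1 A2] := matchingP _ _ M1; have [B1 B2] := matchingP _ _ M2.
rewrite prod_setU; last first.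
  apply/disjP => f fD1; apply/negP => fD2.
  by move: (nY1 _ _ M1 fD1); case: (B1 f fD2) => _ ->.
rewrite /covered bigcup_setU.
have C1 := covered_sub M1; have C2 := covered_sub M2.
have -> : (X :|: Y) :\: (covered D1 :|: covered D2) = (X :\: covered D1) :|: (Y :\: covered D2).
  apply/setP => v; rewrite !inE.
  have h1 := subsetP C1 v; have h2 := subsetP C2 v; have h3 := @disjointFr _ _ _ v dXY.
  move: h1 h2 h3; case: (v \in X); case: (v \in Y); case: (v \in covered D1);
    case: (v \in covered D2) => //=;
    do ? [by move=> /(_ isT) | by move=> _ /(_ isT) | by move=> _ _ /(_ isT)].
rewrite prod_setU; last first.
  apply/disjP => v; rewrite !inE => /andP [_ vX]; apply/negP => /andP [_ vY].
  by move: (disjointFr dXY vX); rewrite vY.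
by rewrite mulrACA.
Qed.

Lemma Zsplit (X Y : {set V}) : [disjoint X & Y] ->
  (forall u v, u \in X -> v \in Y -> ~~ e u v) ->
  Zmd e x w (X :|: Y) = Zmd e x w X * Zmd e x w Y.
Proof.
move=> dXY nc; rewrite -Zsplit_gen // /Zmd; apply: eq_bigl => D.
case M: (matching_in e (X :|: Y) D) => //=; symmetry.
case/matchingP: M => H1 _; apply/forall_inP => f fD.
by case: (H1 f fD) => ef sf; apply: edge_split ef sf.
Qed.
Lemma Zedge (X Y : {set V}) a b : [disjoint X & Y] -> a \in X -> b \in Y -> e a b ->
  (forall u v, u \in X -> v \in Y -> e u v -> u = a /\ v = b) ->
  Zmd e x w (X :|: Y) =
  Zmd e x w X * Zmd e x w Y + w [set a; b] * (Zmd e x w (X :\ a) * Zmd e x w (Y :\ b)).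
Proof.
move=> dXY aX bY eab cr.
have aY : a \notin Y by rewrite (disjointFr dXY aX).
have bX : b \notin X by apply/negP => bX; rewrite (disjointFr dXY bX) in bY.
have ab_edge : is_edge e [set a; b] by apply/is_edgeP; exists a, b.
rewrite /Zmd (bigID (fun D : {set {set V}} => [set a; b] \in D)) /= addrC.
congr (_ + _).
  rewrite -Zsplit_gen //; apply: eq_bigl => D.
  case M: (matching_in e (X :|: Y) D) => //=.
  case/matchingP: M => H1 _; apply/idP/idP.
    move=> nab; apply/forall_inP => f fD; case: (H1 f fD) => /is_edgeP [u [v [euv fE]]].
    rewrite fE !subUset !sub1set !inE => /andP [/orP [uX|uY] /orP [vX|vY]].
    - by rewrite uX vX.
    - case: (cr u v uX vY euv) => ua vb; move: fD nab; rewrite fE ua vb => ->.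
      done.
    - case: (cr v u vX uY); first by rewrite esym.
      move=> va ub; move: fD nab; rewrite fE va ub setUC => ->. done.
    - by rewrite uY vY orbT.
  move/forall_inP => H; apply/negP => /H.
  by rewrite !subUset !sub1set (negbTE bX) (negbTE aY) andbF.
have -> : Zmd e x w (X :\ a) * Zmd e x w (Y :\ b) = Zmd e x w ((X :\ a) :|: (Y :\ b)).
  rewrite Zsplit //.
    apply/disjP => v; rewrite !inE => /andP [_ vX]; apply/negP => /andP [_ vY].
    by rewrite (disjointFr dXY vX) in vY.
  move=> u v; rewrite !inE => /andP [ua uX] /andP [vb vY]; apply/negP => euv.
  by case: (cr u v uX vY euv) => ua'; rewrite ua' eqxx in ua.
set S' := (X :\ a) :|: (Y :\ b).
rewrite /Zmd big_distrr /=.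
rewrite (reindex_onto (fun D' => [set a; b] |: D') (fun D => D :\ [set a; b])) /=;
  last by move=> D /andP [_ abD]; rewrite setD1K.
have S'E : S' = (X :|: Y) :\: [set a; b].
  apply/setP => v; rewrite !inE.
  case: (v =P a) => [->|/eqP va]; first by rewrite (negbTE aY) /= andbF.
  case: (v =P b) => [->|/eqP vb]; first by rewrite (negbTE bX) /= ?andbF ?orbF ?orbT.
  by [].
have notS' : forall v, v \in [set a; b] -> v \notin S'.
  by move=> v; rewrite S'E !inE => ->.
have PE : forall D', (matching_in e (X :|: Y) ([set a; b] |: D') &&
    ([set a; b] \in [set a; b] |: D')) && (([set a; b] |: D') :\ [set a; b] == D')
    = matching_in e S' D'.
  move=> D'; rewrite setU11 andbT.
  have -> : (([set a; b] |: D') :\ [set a; b] == D') = ([set a; b] \notin D').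
    case: (boolP ([set a; b] \in D')) => h; last by rewrite setU1K ?eqxx.
    apply/negbTE/negP => /eqP E; move: h; rewrite -E !inE eqxx. done.
  apply/idP/idP.
    case/andP => /matchingP [H1 H2] nab; apply/matchingP; split.
      move=> f fD; have fD' : f \in [set a; b] |: D' by rewrite !inE fD orbT.
      case: (H1 f fD') => -> sf; split => //.
      have fab : f != [set a; b] by apply/eqP => fE; rewrite -fE fD in nab.
      have dj := H2 f _ fD' (setU11 _ _) fab.
      apply/subsetP => v vf; rewrite S'E in_setD (subsetP sf v vf) andbT.
      apply/negP => vab; have := disjointFr dj vf; move: vab.
      by rewrite !inE => /orP [] /eqP ->; rewrite eqxx ?orbT.
    by move=> f g fD gD; apply: H2; rewrite !inE ?fD ?gD orbT.
  move=> M; have [H1 H2] := matchingP _ _ M.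
  have dab : forall g, g \in D' -> [disjoint [set a; b] & g].
    move=> g gD; apply/disjP => v vab; apply/negP => vg.
    case: (H1 g gD) => _ /subsetP sg; move: (notS' v vab); rewrite sg //.
  apply/andP; split.
    apply/matchingP; split.
      move=> f; rewrite !inE => /orP [/eqP ->|fD].
        split => //; rewrite !subUset !sub1set !inE aX bY orbT //.
      case: (H1 f fD) => -> sf; split => //; apply: subset_trans sf _.
      by rewrite S'E subsetDl.
    move=> f g; rewrite !inE => /orP [/eqP ->|fD] /orP [/eqP ->|gD].
    - by rewrite eqxx.
    - by move=> _; apply: dab.
    - by move=> _; rewrite disjoint_sym; apply: dab.
    - exact: H2.
  apply/negP => abD; case: (H1 _ abD) => _ /subsetP s.
  by move: (notS' a (setU11 _ _)); rewrite s // !inE eqxx.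
apply: eq_big => D'; first exact: PE.
rewrite PE => M.
have nab : [set a; b] \notin D'.
  apply/negP => abD; case/matchingP: M => H1 _; case: (H1 _ abD) => _ /subsetP s.
  by move: (notS' a (setU11 _ _)); rewrite s // !inE eqxx.
rewrite big_setU1 //= /covered bigcup_setU big_set1 -mulrA; congr (_ * (_ * _)).
apply: eq_bigl => v; rewrite S'E !inE.
by case: (v == a); case: (v == b); case: (v \in \bigcup_(f in D') f).
Qed.

End Zlemmas.

Section Chain.
Variables (R : realFieldType) (V : finType) (e : rel V) (x : V -> R) (w : {set V} -> R).
Hypothesis esym : symmetric e.
Hypothesis hx : forall v, 0 < x v.
Hypothesis hw : forall f, is_edge e f -> 0 < w f.

Lemma Zge0 S : 0 <= Zmd e x w S.
Proof.
apply: sumr_ge0 => D /matchingP [H1 _]; apply: mulr_ge0; apply: prodr_ge0 => i ?.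
  by apply: ltW; apply: hw; case: (H1 i).
exact: ltW.
Qed.

Lemma Zset0 : Zmd e x w set0 = 1.
Proof.
rewrite /Zmd (big_pred1 set0) => [|D].
  by rewrite big_set0 mul1r set0D big_set0.
apply/idP/eqP => [/matchingP [H1 _]|->].
  apply/setP => f; rewrite inE; apply/negP => fD.
  case: (H1 f fD) => /edge_n0 [a af] /subsetP s.
  by move: (s a af); rewrite inE.
by apply/matchingP; split => f; rewrite inE.
Qed.

Variables (U : nat -> {set V}) (c : nat -> V) (l : nat).
Hypothesis HUdec : forall k, U k.+1 \subset U k.
Hypothesis Hc : forall k, (k <= l)%N -> c k \in U k.
Hypothesis Hcn : forall k, (k <= l)%N -> c k \notin U k.+1.
Hypothesis He : forall k, (k < l)%N -> e (c k) (c k.+1).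
Hypothesis Hcross : forall k u v, (0 < k <= l)%N -> u \in U k -> v \notin U k -> e u v ->
  u = c k /\ v = c k.-1.

Let Z S := Zmd e x w S.
Let ZZ i j := Z (U i :\: U j.+1).
Let ZP i j := Z ((U i :\: U j.+1) :\ c j).
Let W k := w [set c k; c k.+1].

Lemma Umono i j : (i <= j)%N -> U j \subset U i.
Proof.
elim: j => [|j IH]; first by rewrite leqn0 => /eqP ->.
rewrite leq_eqVlt => /orP [/eqP ->//|]; rewrite ltnS => /IH.
exact: subset_trans (HUdec j).
Qed.

Lemma rec1 i j : (i <= j)%N -> (j < l)%N ->
  ZZ i j.+1 = ZZ i j * ZZ j.+1 j.+1 + W j * (ZP i j * ZP j.+1 j.+1).
Proof.
move=> ij jl; rewrite /ZZ /ZP /Z /W.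
have sub1 := Umono (leqW ij); have sub2 := HUdec j.+1.
have -> : U i :\: U j.+2 = (U i :\: U j.+1) :|: (U j.+1 :\: U j.+2).
  apply/setP => v; rewrite !inE.
  case vj1: (v \in U j.+1); first by rewrite (subsetP sub1 v vj1) /= ?andbT.
  have -> : (v \in U j.+2) = false by apply/negP => /(subsetP sub2); rewrite vj1.
  by rewrite /= ?orbF.
rewrite (@Zedge _ _ _ x w esym _ _ (c j) (c j.+1)) //.
- apply/disjP => v; rewrite !inE => /andP [vn _]; by rewrite (negbTE vn) andbF.
- by rewrite !inE Hcn ?(ltnW jl) // (subsetP (Umono ij)) // Hc // ltnW.
- by rewrite !inE Hcn // Hc.
- exact: He.
- move=> u v; rewrite !inE => /andP [un _] /andP [_ vj] euv.
  have ev : e v u by rewrite esym.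
  by have [-> ->] := Hcross (jl : (0 < j.+1 <= l)%N) vj un ev.
Qed.

Lemma rec2 i j : (i <= j)%N -> (j < l)%N -> ZP i j.+1 = ZZ i j * ZP j.+1 j.+1.
Proof.
move=> ij jl; rewrite /ZZ /ZP /Z /W.
have sub1 := Umono (leqW ij); have sub2 := HUdec j.+1.
have -> : (U i :\: U j.+2) :\ c j.+1 = (U i :\: U j.+1) :|: ((U j.+1 :\: U j.+2) :\ c j.+1).
  apply/setP => v; rewrite !inE.
  case vj1: (v \in U j.+1); first by rewrite (subsetP sub1 v vj1) /= ?andbT.
  have -> : (v \in U j.+2) = false by apply/negP => /(subsetP sub2); rewrite vj1.
  case: (v =P c j.+1) => [vc|]; last by rewrite /= ?orbF.
  by move: vj1; rewrite vc Hc.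
rewrite (@Zsplit _ _ _ x w esym) //.
- by apply/disjP => v; rewrite !inE => /andP [vn _]; rewrite (negbTE vn) !andbF.
- move=> u v; rewrite !inE => /andP [un _] /and3P [vc _ vj]; apply/negP => euv.
  have ev : e v u by rewrite esym.
  have [vc' _] := Hcross (jl : (0 < j.+1 <= l)%N) vj un ev.
  by rewrite vc' eqxx in vc.
Qed.

Lemma chain : (1 <= l)%N ->
  if odd l then ZZ 1 l * ZZ 0 l.-1 <= Z (U 1 :\: U l) * ZZ 0 l
  else Z (U 1 :\: U l) * ZZ 0 l <= ZZ 1 l * ZZ 0 l.-1.
Proof.
move=> l1.
have Wge : forall j, (j < l)%N -> 0 <= W j.
  by move=> j jl; apply: ltW; apply: hw; apply/is_edgeP; exists (c j), (c j.+1); rewrite He.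
have ZZge : forall i j, 0 <= ZZ i j by move=> i j; apply: Zge0.
have ZPge : forall i j, 0 <= ZP i j by move=> i j; apply: Zge0.
have Dsign : forall j, (1 <= j <= l)%N ->
    if odd j then 0 <= ZZ 0 j * ZP 1 j - ZP 0 j * ZZ 1 j
    else ZZ 0 j * ZP 1 j - ZP 0 j * ZZ 1 j <= 0.
  elim => [//|j IH]; case: j IH => [|j] IH /andP [_ hj].
    rewrite /= (@rec1 0 0) // (@rec2 0 0) //.
    have -> : (ZZ 0 0 * ZZ 1 1 + W 0 * (ZP 0 0 * ZP 1 1)) * ZP 1 1 - ZZ 0 0 * ZP 1 1 * ZZ 1 1
      = W 0 * ZP 0 0 * (ZP 1 1 * ZP 1 1) by ring.
    by rewrite !mulr_ge0 // Wge.
  have IH' := IH (ltnW hj).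
  rewrite (@rec1 0 j.+1) // (@rec2 0 j.+1) // (@rec1 1 j.+1) // (@rec2 1 j.+1) //.
  have -> : (ZZ 0 j.+1 * ZZ j.+2 j.+2 + W j.+1 * (ZP 0 j.+1 * ZP j.+2 j.+2)) * (ZZ 1 j.+1 * ZP j.+2 j.+2)
     - ZZ 0 j.+1 * ZP j.+2 j.+2 * (ZZ 1 j.+1 * ZZ j.+2 j.+2 + W j.+1 * (ZP 1 j.+1 * ZP j.+2 j.+2))
     = - (W j.+1 * (ZP j.+2 j.+2 * ZP j.+2 j.+2)) * (ZZ 0 j.+1 * ZP 1 j.+1 - ZP 0 j.+1 * ZZ 1 j.+1) by ring.
  have Wp : 0 <= W j.+1 * (ZP j.+2 j.+2 * ZP j.+2 j.+2) by rewrite !mulr_ge0 // Wge.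
  move: IH'; rewrite /= negbK; case: (odd j) => /= hD.
    by rewrite mulNr oppr_ge0 mulr_ge0_le0.
  by rewrite mulNr oppr_le0 mulr_ge0.
case: (ltngtP l 1) => [|lgt1|l1E]; first by rewrite ltnNge l1.
  set m := l.-1.
  have lE : l = m.+1 by rewrite /m prednK // ltnW.
  have m1 : (1 <= m)%N by rewrite -ltnS -lE.
  have ml : (m < l)%N by rewrite lE.
  have := Dsign m; rewrite m1 (ltnW ml) => /(_ isT) hD.
  rewrite lE /= -/(ZZ 1 m) (@rec1 0 m) // (@rec1 1 m) //.
  have Wp : 0 <= W m * ZP m.+1 m.+1 by rewrite mulr_ge0 // Wge.
  move: hD; case: (odd m) => /= hD; rewrite -subr_ge0.
    have -> : (ZZ 1 m * ZZ m.+1 m.+1 + W m * (ZP 1 m * ZP m.+1 m.+1)) * ZZ 0 m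
       - ZZ 1 m * (ZZ 0 m * ZZ m.+1 m.+1 + W m * (ZP 0 m * ZP m.+1 m.+1))
       = (W m * ZP m.+1 m.+1) * (ZZ 0 m * ZP 1 m - ZP 0 m * ZZ 1 m) by ring.
    by rewrite mulr_ge0.
  have -> : ZZ 1 m * (ZZ 0 m * ZZ m.+1 m.+1 + W m * (ZP 0 m * ZP m.+1 m.+1))
     - (ZZ 1 m * ZZ m.+1 m.+1 + W m * (ZP 1 m * ZP m.+1 m.+1)) * ZZ 0 m
     = - (W m * ZP m.+1 m.+1) * (ZZ 0 m * ZP 1 m - ZP 0 m * ZZ 1 m) by ring.
  by rewrite mulNr oppr_ge0 mulr_ge0_le0.
rewrite l1E /= (@rec1 0 0) // ?l1E // -/(Z set0).
have -> : U 1 :\: U 1 = set0 by rewrite setDv.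
rewrite /Z Zset0 mul1r -subr_ge0.
have -> : ZZ 0 0 * ZZ 1 1 + W 0 * (ZP 0 0 * ZP 1 1) - ZZ 1 1 * ZZ 0 0
  = W 0 * (ZP 0 0 * ZP 1 1) by ring.
by rewrite !mulr_ge0 // Wge // l1E.
Qed.

End Chain.

End ZFacts.
Import ZFacts.

Theorem lemma5p2 (R : realFieldType) (V : finType) (e : rel V)
    (x : V -> R) (w : {set V} -> R)
    (c0 : V) (p : seq V) :
  is_tree e ->
  (forall v, 0 < x v) ->
  (forall f, is_edge e f -> 0 < w f) ->
  path e c0 p -> uniq (c0 :: p) -> (1 <= size p)%N ->
  let c1 := head c0 p in
  let cl := last c0 p in
  let T1 := subtree e c0 c1 in
  let Tl := subtree e c0 cl in
  if odd (size p)
  then Zmd e x w T1 * Zmd e x w (~: Tl) <= Zmd e x w (T1 :\: Tl) * Zmd e x w setT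
  else Zmd e x w (T1 :\: Tl) * Zmd e x w setT <= Zmd e x w T1 * Zmd e x w (~: Tl).
Proof.
move=> tree hx hw pp up l1 /=.
set c1 := head c0 p; set cl := last c0 p; set T1 := subtree e c0 c1; set Tl := subtree e c0 cl.
have esym : symmetric e by case: tree => -[].
pose c k := nth c0 (c0 :: p) k.
pose l := size p.
pose U k := if k == 0%N then setT else if (k <= l)%N then subtree e c0 (c k) else set0.
have U0 : U 0%N = setT by [].
have Uk : forall k, (0 < k <= l)%N -> U k = subtree e c0 (c k).
  by move=> [|k] //= kl; rewrite /U /= kl.
have Ub : forall k, (l < k)%N -> U k = set0.
  by move=> [|k] //= kl; rewrite /U /= leqNgt kl.
have c1E : c 1%N = c1 by rewrite /c /= nth0.
have clE : c l = cl by rewrite /c /cl /l -[size p]/((size (c0 :: p)).-1) nth_last.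
have U1 : U 1%N = T1 by rewrite Uk ?l1 // c1E.
have Ul : U l = Tl by rewrite Uk ?l1 ?leqnn // clE.
have Ul1 : U l.+1 = set0 by apply: Ub.
have := @chain R V e x w esym hx hw U c l.
rewrite (prednK l1) U1 Ul Ul1 U0 !setD0 setTD; apply => //.
- move=> [|k]; first by rewrite U0 subsetT.
  case: (ltnP k.+1 l) => h.
    rewrite !Uk ?h ?(ltnW h) //. exact: (@Hdec' V e tree c0 p pp up k.+1 h).
  by rewrite (Ub k.+2) ?sub0set // ltnS.
- move=> [|k] kl; first by rewrite U0 inE.
  by rewrite Uk //; exact: (@Hc' V e c0 p pp up k.+1 kl).
- move=> k kl; case: (ltnP k l) => h.
    by rewrite Uk //; exact: (@Hcn' V e tree c0 p pp up k h).
  by rewrite Ub ?inE // ltnS.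
- by move=> k kl; move/(pathP c0): pp => /(_ k kl).
- by move=> k u v kl; rewrite Uk //; exact: (@Hcross' V e tree c0 p pp up k u v kl).
Qed.
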